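(* Let $N\in\mathbb{N}$ be odd and either prime or divisible by at least two distinct primes. Let $b\in\mathbb{Z}$ and $f\in\mathbb{Z}[X]$ with $f(b)=N$, let $d:=\deg f$, and suppose $d$ is smaller than $q:=\max\{q'\text{ prime}:q'\mid N\}$ and $\gcd(\mathrm{lc}(f),N)=1$, where $\mathrm{lc}(f)$ is the leading coefficient of $f$. Then \[N\text{ is prime}\iff \forall x\in\{0,\dots,N-1\}:\ f(x)^{N-1}\bmod N\in\{0,1\}.\] *)

(* Defs.v *)
From mathcomp Require Import all_boot all_order all_algebra.
Set Implicit Arguments. Unset Strict Implicit. Unset Printing Implicit Defensive.
Import Order.TTheory GRing.Theory Num.Theory.

Definition two_distinct_prime_divisors (N : nat) : Prop :=
  exists p1 p2 : nat, [/\ prime p1, prime p2, p1 != p2, (p1 %| N)%N & (p2 %| N)%N].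

(* Main.v *)
Require Import Defs.
From mathcomp Require Import all_boot all_order all_algebra all_field.
Import Order.TTheory GRing.Theory Num.Theory.
Local Open Scope ring_scope.

Lemma F_dvd (p : nat) (z : int) : prime p -> ((z%:~R : 'F_p) == 0) = (p %| z)%Z.
Proof. by move=> pp; rewrite (dvdz_pcharf (pchar_Fp pp)). Qed.

Lemma F_eq (p : nat) (m n : int) : prime p ->
  ((m%:~R : 'F_p) == n%:~R) = (m == n %[mod p])%Z.
Proof. by move=> pp; rewrite eqz_mod_dvd -subr_eq0 -rmorphB /= F_dvd. Qed.

Lemma F_mod (p N : nat) (m : int) : prime p -> (p %| N)%N ->
  (((m %% N)%Z)%:~R : 'F_p) = m%:~R.
Proof.
move=> pp dN; rewrite [in RHS](divz_eq m N) [RHS]intrD [X in _ = X + _]intrM.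
have -> : ((N%:Z)%:~R : 'F_p) = 0 by apply/eqP; rewrite F_dvd.
by rewrite mulr0 add0r.
Qed.

Lemma F_nat (p x : nat) : ((x%:Z)%:~R : 'F_p) = x%:R.
Proof. by []. Qed.

Theorem theorem5p1 (N : nat) (b : int) (f : {poly int}) :
  odd N ->
  prime N \/ two_distinct_prime_divisors N ->
  f.[b] = N%:Z ->
  ((size f).-1 < max_pdiv N)%N ->
  gcdz (lead_coef f) N%:Z = 1%N ->
  (prime N <->
   (forall x : nat, (x < N)%N ->
      let r := ((f.[x%:Z] ^+ N.-1) %% N%:Z)%Z in r = 0 \/ r = 1)).
Proof.
move=> oddN hN fb hsz hgcd.
have N0 : (0 < N)%N by case: N oddN {hN fb hsz hgcd}.
have N1 : (1 < N)%N.
  case: hN => [/prime_gt1 //|[p1 [p2 [pp1 _ _ d1 _]]]].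
  by apply: leq_trans (prime_gt1 pp1) (dvdn_leq N0 d1).
have NN : (N.-1 != 0)%N by case: N N1 {N0 oddN hN fb hsz hgcd} => [|[|]].
split.
- move=> pN x _ /=; set y := f.[x%:Z].
  have [Hy|Hy] := eqVneq (y%:~R : 'F_N) 0.
    left; apply/dvdz_mod0P; rewrite -F_dvd // rmorphXn /= Hy expr0n.
    by rewrite (negbTE NN).
  right.
  have e : ((y ^+ N.-1)%:~R : 'F_N) = (1 : int)%:~R.
    rewrite rmorphXn /= ; apply: (mulfI Hy).
    rewrite -exprS prednK // mulr1.
    by have := expf_card (y%:~R : 'F_N); rewrite card_Fp.
  move/eqP: e; rewrite F_eq // => /eqP ->.
  by rewrite modz_small //= ltz_nat.
- move=> H.
  case: hN => [//|[p1 [p2 [pp1 pp2 ne d1 d2]]]].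
  set q := max_pdiv N.
  have pq : prime q by apply: max_pdiv_prime.
  have dq : (q %| N)%N by apply: max_pdiv_dvd.
  have [p [pp dp neq]] : exists p, [/\ prime p, (p %| N)%N & p != q].
    case: (eqVneq p1 q) => [e|n1]; last by exists p1.
    by exists p2; split=> //; rewrite -e eq_sym.
  exfalso.
  have lc0 : ((lead_coef f)%:~R : 'F_q) != 0.
    rewrite F_dvd //; apply/negP => dl.
    have : (q %| gcdz (lead_coef f) N)%Z by rewrite dvdz_gcd dl /=.
    rewrite hgcd dvdz1 /= => /eqP q1.
    by move: (prime_gt1 pq); rewrite q1.
  set g := map_poly (intr : int -> 'F_q) f.
  have szg : size g = size f by apply: size_map_poly_id0.
  have gnz : g != 0.
    by rewrite -size_poly_eq0 szg size_poly_eq0 -lead_coef_eq0; apply: contraNneq lc0 => ->.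
  have : ~~ all (root g) (enum 'F_q).
    apply/negP => Hall.
    have := max_poly_roots gnz Hall (enum_uniq _).
    rewrite -cardE card_Fp // szg.
    by move: hsz; case: (size f) => // n /= h; rewrite ltnS leqNgt h.
  case/allPn => a _ Ha.
  set bp : nat := nat_of_ord (b%:~R : 'F_p).
  have cpq : coprime p q by rewrite prime_coprime // dvdn_prime2.
  set x0 := chinese p q bp a.
  set x := (x0 %% N)%N.
  have xN : (x < N)%N by rewrite ltn_pmod.
  have Hp : ((x%:Z)%:~R : 'F_p) = b%:~R.
    rewrite F_nat -Fp_nat_mod // /x (modn_dvdm _ dp) /x0 chinese_modl //.
    by rewrite Fp_nat_mod // natr_Zp.
  have Hq : ((x%:Z)%:~R : 'F_q) = a.
    rewrite F_nat -Fp_nat_mod // /x (modn_dvdm _ dq) /x0 chinese_modr //.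
    by rewrite Fp_nat_mod // natr_Zp.
  have yp : (f.[x%:Z]%:~R : 'F_p) = 0.
    rewrite -horner_map /= Hp horner_map fb.
    by apply/eqP; rewrite F_dvd.
  have yq : (f.[x%:Z]%:~R : 'F_q) != 0.
    by rewrite -horner_map /= Hq.
  case: (H x xN) => /= e.
  + have := @F_mod q N (f.[x%:Z] ^+ N.-1) pq dq.
    rewrite e rmorphXn /= => /esym/eqP.
    by rewrite expf_eq0 (negbTE yq) andbF.
  + have := @F_mod p N (f.[x%:Z] ^+ N.-1) pp dp.
    rewrite e rmorphXn /= yp expr0n (negbTE NN) rmorph1.
    by move/eqP; rewrite oner_eq0.
Qed.
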